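(* Let $K$ be a finite field, let $L$ be the quadratic extension of $K$, and let $d$ be an integer with $\gcd(d,|L|-1)=1$. Then $\sum_{a\in K^\times}W_{L,d}(a)=|L|$.
   Context: For a finite field $F$ of characteristic $p$, $\psi_F(x)=\exp(2\pi i\,\mathrm{Tr}_{F/\mathbb{F}_p}(x)/p)$; for $a\in L$, $W_{L,d}(a)=\sum_{x\in L}\psi_L(x^d+ax)$. *)

(* Defs.v *)
From HB Require Import structures.
From mathcomp Require Import all_boot all_order all_algebra all_field.
Set Implicit Arguments. Unset Strict Implicit. Unset Printing Implicit Defensive.
Import Order.TTheory GRing.Theory Num.Theory.
Local Open Scope ring_scope.

(* The characteristic p of a finite field F: the (unique) prime dividing #|F|. *)
Definition fchar (F : finFieldType) : nat := pdiv #|F|.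

Definition fdeg (F : finFieldType) : nat := logn (fchar F) #|F|.

Definition absTr (F : finFieldType) (x : F) : F :=
  \sum_(i < fdeg F) x ^+ (fchar F ^ i).

Definition absTr_nat (F : finFieldType) (x : F) : nat :=
  odflt 0%N (omap (@nat_of_ord _) [pick k : 'I_(fchar F) | (k%:R : F) == absTr x]).

(* exp(2 pi i / n) in algC: n.-root (-1) = exp(i pi / n), squared. *)
Definition e2pi (n : nat) : algC := (n.-root (-1)) ^+ 2.

Definition psi (F : finFieldType) (x : F) : algC :=
  e2pi (fchar F) ^+ absTr_nat x.

Definition W (L : finFieldType) (d : nat) (a : L) : algC :=
  \sum_(x : L) psi (x ^+ d + a * x).

(* Main.v *)
Require Import Defs.
From HB Require Import structures.
From mathcomp Require Import all_boot all_order all_algebra all_field.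
From mathcomp Require Import zify ring.
Import Order.TTheory GRing.Theory Num.Theory.
Local Open Scope ring_scope.


Lemma charF (F : finFieldType) :
  [/\ prime (fchar F), fchar F \in [pchar F] & #|F| = (fchar F ^ fdeg F)%N].
Proof.
have [p pr pch] := finPcharP F.
have hc : #|F| = (p ^ logn p #|F|)%N by exact: (card_pprimeChar pch).
have hl : (0 < logn p #|F|)%N.
  case E: (logn p #|F|) hc => [|k] //; rewrite expn0 => h1.
  by have := finNzRing_gt1 F; rewrite -cardsT cardsE h1.
have hp : fchar F = p.
  by rewrite /fchar hc; case: (logn p #|F|) hl => // k _; rewrite pdiv_pfactor.
by rewrite /fdeg hp; split.
Qed.

Lemma fdeg_gt0 (F : finFieldType) : (0 < fdeg F)%N.
Proof.
have [pr _ hc] := charF F; case E: (fdeg F) hc => [|k] //; rewrite expn0 => h1.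
by have := finNzRing_gt1 F; rewrite -cardsT cardsE h1.
Qed.

Lemma pnat_pow (F : finFieldType) i : (GRing.pchar F).-nat (fchar F ^ i)%N.
Proof.
have [pr pch _] := charF F.
by rewrite (eq_pnat _ (pcharf_eq pch)) pnatX pnat_id.
Qed.

Lemma frobD (F : finFieldType) (x y : F) i :
  (x + y) ^+ (fchar F ^ i)%N = x ^+ (fchar F ^ i)%N + y ^+ (fchar F ^ i)%N.
Proof. exact: exprDn_pchar (pnat_pow F i). Qed.

Lemma absTrD (F : finFieldType) (x y : F) : absTr (x + y) = absTr x + absTr y.
Proof. by rewrite /absTr -big_split /=; apply: eq_bigr => i _; rewrite frobD. Qed.

Lemma frobsum (F : finFieldType) (I : Type) (r : seq I) (P : pred I) (G : I -> F) i :
  (\sum_(j <- r | P j) G j) ^+ (fchar F ^ i)%N = \sum_(j <- r | P j) G j ^+ (fchar F ^ i)%N.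
Proof.
apply: (big_morph (fun x => x ^+ (fchar F ^ i)%N)) => [x y|]; first exact: frobD.
have [pr _ _] := charF F; rewrite expr0n expn_eq0.
by rewrite eqn0Ngt prime_gt0.
Qed.

Lemma absTr_fix (F : finFieldType) (x : F) : absTr x ^+ fchar F = absTr x.
Proof.
have [pr pch hc] := charF F.
rewrite -{1}(expn1 (fchar F)) frobsum /absTr.
have -> : \sum_(i < fdeg F) (x ^+ (fchar F ^ i)%N) ^+ (fchar F ^ 1)%N
   = \sum_(i < fdeg F) x ^+ (fchar F ^ i.+1)%N.
  by apply: eq_bigr => i _; rewrite -exprM -expnSr.
have := fdeg_gt0 F; case: (fdeg F) hc => // k hc _.
rewrite big_ord_recr big_ord_recl /= -hc expf_card addrC; congr (_ + _).
Qed.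


Lemma natr_inj_lt (F : finFieldType) (i j : nat) :
  (i < fchar F)%N -> (j < fchar F)%N -> (i%:R = j%:R :> F) -> i = j.
Proof.
have [pr pch _] := charF F.
wlog le: i j / (i <= j)%N.
  move=> H hi hj e; case: (leqP i j) => [l|l]; first exact: H.
  by apply/esym/H => //; apply: ltnW.
move=> hi hj e.
have : (fchar F %| j - i)%N by rewrite (dvdn_pcharf pch) natrB // e subrr.
rewrite /dvdn modn_small; last by lia.
move/eqP; lia.
Qed.

Lemma primefield (F : finFieldType) (t : F) :
  t ^+ fchar F = t -> exists2 k, (k < fchar F)%N & t = k%:R.
Proof.
have [pr pch _] := charF F; set p := fchar F in pr pch *.
move=> ht.
case: (pickP (fun k : 'I_p => t == k%:R)) => [k /eqP hk | none]; first by exists k.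
have p2 : (1 < p)%N by apply: prime_gt1.
pose P : {poly F} := 'X^p - 'X.
have sP : size P = p.+1.
  by rewrite /P size_polyDl ?size_polyXn // size_polyN size_polyX.
have P0 : P != 0 by rewrite -size_poly_eq0 sP.
pose rs := t :: [seq (k%:R : F) | k <- iota 0 p].
have := max_poly_roots P0 (rs := rs).
rewrite sP /rs /= size_map size_iota ltnn.
have rt : forall z : F, z ^+ p = z -> root P z.
  by move=> z hz; rewrite /root /P !hornerE hz subrr.
rewrite rt // /=.
have -> : all (root P) [seq (k%:R : F) | k <- iota 0 p].
  apply/allP => z /mapP [k _ ->]; apply: rt.
  exact: (pFrobenius_aut_nat pch k).
have -> : uniq [seq (k%:R : F) | k <- iota 0 p].
  rewrite map_inj_in_uniq ?iota_uniq // => a b; rewrite !mem_iota /= => ha hb.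
  by apply: natr_inj_lt.
suff nt : t \notin [seq (k%:R : F) | k <- iota 0 p] by move=> /(_ isT); rewrite nt => /(_ isT).

apply/mapP => [[k]]; rewrite mem_iota /= => hk e.
by have := none (Ordinal hk); rewrite /= e eqxx.
Qed.

Lemma absTr_natP (F : finFieldType) (x : F) :
  (absTr_nat x < fchar F)%N /\ (absTr_nat x)%:R = absTr x.
Proof.
rewrite /absTr_nat; case: pickP => [k /eqP hk | none] /=; first by [].
have [k hk e] := @primefield F _ (absTr_fix F x).
by have := none (Ordinal hk); rewrite /= e eqxx.
Qed.

Lemma absTr_nat0 (F : finFieldType) (x : F) : absTr x = 0 -> absTr_nat x = 0%N.
Proof.
move=> h; have [lt e] := absTr_natP F x.
have [pr _ _] := charF F.
apply: (@natr_inj_lt F) => //; first exact: prime_gt0 pr.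
by rewrite e h.
Qed.



Lemma not_root_N1 (p : nat) : prime p -> p.-root (-1 : algC) != -1.
Proof.
move=> pr; have p0 := prime_gt0 pr; have p1 := prime_gt1 pr.
apply/eqP => wE.
have [z zp] : {z : algC | (2 * p)%N.-primitive_root z} by apply: C_prim_root_exists; rewrite muln_gt0 p0.
have zp1 : z ^+ p = -1.
  have : (z ^+ p) ^+ 2 == 1 by rewrite -exprM mulnC prim_expr_order.
  rewrite sqrf_eq1 => /orP [h|/eqP //].
  move: h; rewrite -(expr0 z) (eq_prim_root_expr zp) mod0n.
  by rewrite modn_small ?gtn_eqF ?prime_gt0 // -{1}(mul1n p) ltn_pmul2r.
pose y := if 0 <= 'Im z then z else z^*.
have yp : y ^+ p = -1 by rewrite /y; case: ifP => // _; rewrite -rmorphXn zp1 rmorphN1.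
have yI : 0 <= 'Im y.
  rewrite /y; case: ifPn => // h; rewrite Im_conj oppr_ge0.
  by rewrite -real_ltNge ?Creal_Im ?real0 // in h; apply: ltW.
have yR := rootC_Re_max p0 yp yI.
rewrite wE [X in _ <= X](Creal_ReP _ _) ?rpredN ?rpred1 // in yR.
have ny : `|y| = 1.
  apply/eqP; rewrite -(pexpr_eq1 p0) ?normr_ge0 // -normrX yp normrN normr1 //.
have e1 : `|y + 1| ^+ 2 = 2 * ('Re y + 1).
  rewrite normCK rmorphD rmorph1 ReE mulrDl !mulrDr -normCK ny expr1n.
  rewrite mulr1 mul1r mulrCA divff ?pnatr_eq0 // mulr1; ring.
have le0 : `|y + 1| ^+ 2 <= 0.
  rewrite e1 pmulr_rle0 ?ltr0n //.
  by rewrite -[0](addNr 1) lerD2r.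
have y1 : y = -1.
  have : `|y + 1| ^+ 2 == 0 by rewrite eq_le le0 exprn_ge0 ?normr_ge0.
  by rewrite expf_eq0 /= normr_eq0 addr_eq0 => /eqP.
have z1 : z = -1.
  move: y1; rewrite /y; case: ifP => // _ /(congr1 (@Num.conj _)).
  by rewrite conjCK rmorphN1.
have : z ^+ 2 == z ^+ 0 by rewrite z1 expr0 sqrrN expr1n.
rewrite (eq_prim_root_expr zp) mod0n modn_small //.
by rewrite -{1}(muln1 2%N) ltn_pmul2l.
Qed.

Lemma e2pi_prim (p : nat) : prime p -> p.-primitive_root (e2pi p).
Proof.
move=> pr; have p0 := prime_gt0 pr.
have wp : p.-root (-1 : algC) ^+ p = -1 by apply: rootCK.
have zp : e2pi p ^+ p = 1 by rewrite /e2pi -exprM mulnC exprM wp sqrrN expr1n.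
have [m mp mdp] := prim_order_exists p0 zp.
case: (eqVneq m 1%N) => [m1|m1].
  2: { have hm : m = p by apply/(prime_nt_dvdP pr m1). by rewrite hm in mp. }
exfalso; move: (prim_expr_order mp); rewrite m1 expr1 /e2pi.
move/eqP; rewrite sqrf_eq1 => /orP [/eqP h1 | /eqP h2].
  by move: wp; rewrite h1 expr1n => /eqP; rewrite -addr_eq0 (pnatr_eq0 _ 2).
by move/negP: (@not_root_N1 p pr); apply; rewrite h2.
Qed.


Lemma psiD (F : finFieldType) (x y : F) : psi (x + y) = psi x * psi y.
Proof.
have [pr pch _] := charF F.
have [ha ea] := absTr_natP F x; have [hb eb] := absTr_natP F y.
have [hc ec] := absTr_natP F (x + y).
have zp := prim_expr_order (@e2pi_prim _ pr).
rewrite /psi -exprD -[in RHS](expr_mod _ zp); congr (_ ^+ _).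
apply: (@natr_inj_lt F) => //; first by rewrite ltn_mod prime_gt0.
by rewrite (GRing.natr_mod_pchar pch) natrD ec ea eb absTrD.
Qed.

Lemma psi_eq1 (F : finFieldType) (x : F) : (psi x == 1) = (absTr x == 0).
Proof.
have [pr pch _] := charF F.
have [ha ea] := absTr_natP F x.
rewrite /psi -(expr0 (e2pi (fchar F))) (eq_prim_root_expr (@e2pi_prim _ pr)) mod0n.
rewrite modn_small //.
apply/eqP/eqP => [h|h]; first by rewrite -ea h.
exact: absTr_nat0.
Qed.

Lemma psi0 (F : finFieldType) : psi (0 : F) = 1.
Proof.
by apply/eqP; rewrite psi_eq1 /absTr big1 // => i _; rewrite expr0n expn_eq0 eqn0Ngt prime_gt0 //; case: (charF F).
Qed.


Lemma nondeg (F : finFieldType) (m : nat) (c : F) (s : seq F) :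
  (0 < m)%N -> c != 0 -> uniq s -> (fchar F ^ m.-1 < size s)%N ->
  exists2 z, z \in s & \sum_(i < m) (z * c) ^+ (fchar F ^ i)%N != 0.
Proof.
move=> m0 c0 us hs; have [pr pch _] := charF F; set p := fchar F in pr pch hs *.
have p1 := prime_gt1 pr.
pose P : {poly F} := \sum_(i < m) (c ^+ (p ^ i)%N) *: 'X^(p ^ i)%N.
have hP z : P.[z] = \sum_(i < m) (z * c) ^+ (p ^ i)%N.
  rewrite /P horner_sum; apply: eq_bigr => i _.
  by rewrite hornerZ hornerXn exprMn mulrC.
have mm : (m.-1 < m)%N by rewrite prednK.
have cP : P`_(p ^ m.-1)%N = c ^+ (p ^ m.-1)%N.
  rewrite /P coef_sum (bigD1 (Ordinal mm)) //= coefZ coefXn eqxx mulr1 big1 ?addr0 //.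
  move=> i /eqP hi; rewrite coefZ coefXn eqn_exp2l //.
  case: eqP => [e|]; last by rewrite mulr0.
  by exfalso; apply: hi; apply: val_inj => /=.
have P0 : P != 0.
  apply/eqP => e; move: cP; rewrite e coef0 => /esym/eqP.
  by rewrite expf_eq0 (negbTE c0) andbF.
have sP : (size P <= (p ^ m.-1).+1)%N.
  apply: leq_trans (size_sum _ _ _) _; apply/bigmax_leqP => i _.
  apply: leq_trans (size_scale_leq _ _) _; rewrite size_polyXn ltnS.
  by apply: leq_pexp2l; [exact: prime_gt0 | rewrite -ltnS prednK].
case: (boolP (all (root P) s)) => [al|].
  by have := max_poly_roots P0 al us; rewrite ltnNge (leq_trans sP hs).
by move/allPn => [z zs nr]; exists z => //; rewrite -hP.
Qed.


Lemma psi_sum0 (F : finFieldType) : \sum_(y : F) psi y = 0.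
Proof.
have [pr pch hc] := charF F.
have [y0 _ ny] : exists2 z, z \in enum F & \sum_(i < fdeg F) (z * 1) ^+ (fchar F ^ i)%N != 0.
  apply: nondeg; rewrite ?fdeg_gt0 ?oner_neq0 ?enum_uniq //.
  rewrite -cardE hc ltn_exp2l ?prime_gt1 //; have := fdeg_gt0 F; lia.
have py : psi y0 != 1.
  by move: ny; under eq_bigr do rewrite mulr1; rewrite psi_eq1.
have e : \sum_(y : F) psi y = (\sum_(y : F) psi y) * psi y0.
  rewrite [LHS](reindex_inj (addIr y0)) /= mulr_suml; apply: eq_bigr => y _.
  by rewrite psiD.
have : (\sum_(y : F) psi y) * (1 - psi y0) = 0 by rewrite mulrBr mulr1 -e subrr.
by move/eqP; rewrite mulf_eq0 subr_eq0 => /orP [/eqP //|]; rewrite eq_sym (negbTE py).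
Qed.


Lemma same_char (K L : finFieldType) (f : {rmorphism K -> L}) (hL : #|L| = (#|K| ^ 2)%N) : fchar K = fchar L.
Proof.
have [prK pchK _] := charF K; have [prL pchL _] := charF L.
have : fchar K \in [pchar L] by rewrite (fmorph_pchar f).
by rewrite (pcharf_eq pchL) => /eqP.
Qed.

Lemma deg_rel (K L : finFieldType) (f : {rmorphism K -> L}) (hL : #|L| = (#|K| ^ 2)%N) : fdeg L = (fdeg K + fdeg K)%N.
Proof.
have [prK _ hK] := charF K; have [prL _ hLc] := charF L.
move: (hL); rewrite hLc hK (same_char K L f hL) -expnM => /expnI -> //; first lia.
exact: prime_gt1.
Qed.

Lemma trace_split (K L : finFieldType) (f : {rmorphism K -> L}) (hL : #|L| = (#|K| ^ 2)%N) (y : L) :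
  absTr y = \sum_(i < fdeg K) (y + y ^+ #|K|) ^+ (fchar L ^ i)%N.
Proof.
rewrite /absTr.
have -> : \sum_(i < fdeg L) y ^+ (fchar L ^ i)%N
        = \sum_(i < fdeg K + fdeg K) y ^+ (fchar L ^ i)%N.
  by rewrite (deg_rel K L f hL).
rewrite big_split_ord /= -big_split /=; apply: eq_bigr => i _.
rewrite frobD; congr (_ + _).
have [_ _ hK] := charF K.
by rewrite expnD -exprM hK (same_char K L f hL).
Qed.


Theorem lemma2p5 (K L : finFieldType) (f : {rmorphism K -> L})
  (hL : #|L| = (#|K| ^ 2)%N) (d : nat) (hd : coprime d #|L|.-1) :
  \sum_(a : K | a != 0) W d (f a) = (#|L|)%:R.
Proof.
have [prK pchK hK] := charF K; have [prL pchL hLc] := charF L.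
have K1 : (1 < #|K|)%N by have := finNzRing_gt1 K; rewrite -cardsT cardsE.
set q := #|K| in hL hK K1 *.
pose T (x : L) := \sum_(a : K) psi (f a * x).
have d0 : (0 < d)%N.
  case: d hd => // ; rewrite /coprime gcd0n hL => /eqP h.
  have : (4 <= q ^ 2)%N by rewrite (_ : 4 = 2 ^ 2)%N // leq_exp2r.
  lia.
have [u hu] : exists u : nat * nat, (u.1 * d - u.2 * #|L|.-1)%N = 1%N.
  by apply/coprimeP.
have inv (x : L) : (x ^+ d) ^+ u.1 = x.
  rewrite -exprM mulnC.
  have -> : (u.1 * d = 1 + u.2 * #|L|.-1)%N by lia.
  rewrite exprD expr1 mulnC exprM.
  case: (eqVneq x 0) => [->|x0]; first by rewrite mul0r.
  suff -> : x ^+ #|L|.-1 = 1 by rewrite expr1n mulr1.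
  apply: (mulIf x0); rewrite mul1r -exprSr prednK ?expf_card //.
  by rewrite hL expn_gt0 ltnW.
have injd : injective (fun x : L => x ^+ d) by exact: (@can_inj _ _ _ (fun y : L => y ^+ u.1) inv).
have S0 : \sum_(x : L) psi (x ^+ d) = 0.
  transitivity (\sum_(y : L) psi y); last exact: psi_sum0.
  by rewrite [RHS](reindex_inj injd).
have L0 : (0 < #|L|)%N by rewrite hL expn_gt0 ltnW.
have sgn : (-1 : L) ^+ d = -1.
  case: (even_prime prL) => [p2|podd].
    have c2 : (2%N \in [pchar L]) by rewrite -p2.
    by rewrite (oppr_pchar2 c2 1) expr1n.
  have oL : odd #|L| by rewrite hLc oddX podd orbT.
  have od : odd d.
    apply/negPn/negP => ev; move: hd; rewrite /coprime => /eqP g1.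
    have : (2 %| gcdn d #|L|.-1)%N.
      rewrite dvdn_gcd !dvdn2 ev /=.
      by rewrite -oddS prednK.
    by rewrite g1.
  by rewrite -signr_odd od expr1.
have Zpsi (y : L) : y ^+ q = - y -> psi y = 1.
  move=> hy; apply/eqP; rewrite psi_eq1 (@trace_split K L f hL) hy subrr big1 // => i _.
  by rewrite expr0n expn_eq0 eqn0Ngt prime_gt0.
have step3 (x : L) : psi (x ^+ d) * T x = T x.
  case: (eqVneq (x + x ^+ q) 0) => [hz|hz].
    have xq : x ^+ q = - x by apply/eqP; rewrite -addr_eq0 addrC hz.
    rewrite Zpsi ?mul1r // -exprM mulnC exprM xq exprNn sgn mulN1r //.
  have us : uniq (map f (enum K)).
    by rewrite map_inj_uniq ?enum_uniq //; exact: fmorph_inj.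
  have [z zs nz] : exists2 z, z \in map f (enum K) &
      \sum_(i < fdeg K) (z * (x + x ^+ q)) ^+ (fchar L ^ i)%N != 0.
    apply: nondeg => //; first exact: fdeg_gt0.
    rewrite size_map -cardE -/q hK -(same_char K L f hL) ltn_exp2l ?prime_gt1 //.
    by have := fdeg_gt0 K; lia.
  move/mapP: zs => [b _ zb]; subst z.
  have pb : psi (f b * x) != 1.
    rewrite psi_eq1 (@trace_split K L f hL); move: nz.
    by rewrite exprMn -rmorphXn expf_card -mulrDr.
  have e : T x = T x * psi (f b * x).
    rewrite /T [LHS](reindex_inj (addIr b)) /= mulr_suml; apply: eq_bigr => a _.
    by rewrite rmorphD mulrDl psiD.
  have : T x * (1 - psi (f b * x)) = 0 by rewrite mulrBr mulr1 -e subrr.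
  move/eqP; rewrite mulf_eq0 subr_eq0 => /orP [/eqP -> |]; first by rewrite mulr0.
  by rewrite eq_sym (negbTE pb).
have step4 : \sum_(x : L) T x = #|L|%:R.
  rewrite /T exchange_big (bigD1 0) //= rmorph0.
  have -> : \sum_(i | i != 0) \sum_(x : L) psi (f i * x) = 0.
    apply: big1 => a a0; transitivity (\sum_(y : L) psi y); last exact: psi_sum0.
    have fa : f a != 0 by rewrite fmorph_eq0.
    by rewrite [RHS](reindex_inj (mulfI fa)).
  rewrite addr0; under eq_bigr do rewrite mul0r psi0.
  by rewrite sumr_const.
rewrite /W exchange_big /=.
transitivity (\sum_(x : L) (T x - psi (x ^+ d))).
  apply: eq_bigr => x _.
  have e0 : T x = 1 + \sum_(a | a != 0) psi (f a * x).
    by rewrite /T (bigD1 0) //= rmorph0 mul0r psi0.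
  rewrite -(step3 x) e0 mulrDr mulr1 addrAC subrr add0r mulr_sumr.
  by apply: eq_bigr => a _; rewrite psiD.
by rewrite sumrB step4 S0 subr0.
Qed.
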